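(* Let $(\Sigma,E)$ be an algebraic theory with free monad $(T,\eta,\mu)$. For every $T$-semialgebra $\alpha:TX\to X$, the $\Sigma^{\mathrm{s}}$-algebra $G(X,\alpha)=(X,I)$ with $I(\mathsf{a})=\alpha\circ\eta_X$ and $I(\mathsf{op})=\alpha\circ\mathsf{op}^{TX}\circ(\eta_X)^n$ for $(\mathsf{op}:n)\in\Sigma$ is a $(\Sigma^{\mathrm{s}},E^{\mathrm{s}})$-algebra, i.e. it satisfies all equations of $E^{\mathrm{s}}$.
   Context: $T=T_{\Sigma,E}$: $TX$ is the set of $\Sigma$-terms over $X$ modulo the smallest congruence containing substitution instances of $E$, with $\mathsf{op}^{TX}(\overline{t_1},\dots,\overline{t_n})=\overline{\mathsf{op}(t_1,\dots,t_n)}$, $\eta_X(x)=\overline{x}$ and $\mu_X$ flattening terms. A $T$-semialgebra is $\alpha:TX\to X$ with $\alpha\circ\mu_X=\alpha\circ T\alpha$. The theory $(\Sigma^{\mathrm{s}},E^{\mathrm{s}})$: $\Sigma^{\mathrm{s}}=\Sigma\uplus\{\mathsf{a}:1\}$ and $E^{\mathrm{s}}$ consists of $\mathsf{a}\mathsf{a}v_1=\mathsf{a}v_1$; $\mathsf{a}(\mathsf{op}(v_1,\dots,v_n))=\mathsf{op}(v_1,\dots,v_n)$ and $\mathsf{op}(\mathsf{a}v_1,\dots,\mathsf{a}v_n)=\mathsf{op}(v_1,\dots,v_n)$ for every $(\mathsf{op}:n)\in\Sigma$; and $t(\mathsf{a}v_1,\dots,\mathsf{a}v_n)=s(\mathsf{a}v_1,\dots,\mathsf{a}v_n)$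 for every equation $t(v_1,\dots,v_n)=s(v_1,\dots,v_n)$ in $E$. *)

(* Defs.v *)
From mathcomp Require Import all_boot.
From Stdlib Require Import ClassicalEpsilon.

Set Implicit Arguments.
Unset Strict Implicit.
Unset Printing Implicit Defensive.

Record signature := Signature { sop : Type; sar : sop -> nat }.

Inductive term (S : signature) (X : Type) : Type :=
| Var : X -> term S X
| App : forall o : sop S, ('I_(sar o) -> term S X) -> term S X.
Arguments Var {S X} _.
Arguments App {S X} _ _.

Fixpoint bind (S : signature) (X Y : Type) (s : X -> term S Y) (t : term S X)
  : term S Y :=
  match t with
  | Var x => s x
  | App o ts => App o (fun i => bind s (ts i))
  end.

Definition fmap (S : signature) (X Y : Type) (f : X -> Y) (t : term S X)
  : term S Y := bind (fun x => Var (f x)) t.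

Definition equations (S : signature) := term S nat -> term S nat -> Prop.

Inductive conv (S : signature) (E : equations S) (X : Type)
  : term S X -> term S X -> Prop :=
| conv_refl t : conv E t t
| conv_sym t u : conv E t u -> conv E u t
| conv_trans t u w : conv E t u -> conv E u w -> conv E t w
| conv_inst l r (sb : nat -> term S X) : E l r -> conv E (bind sb l) (bind sb r)
| conv_cong o (ts us : 'I_(sar o) -> term S X) :
    (forall i, conv E (ts i) (us i)) -> conv E (App o ts) (App o us).

(** T X: terms modulo the congruence, as the type of equivalence classes. *)
Definition cls (S : signature) (E : equations S) (X : Type) (t : term S X)
  : term S X -> Prop := fun u => conv E t u.

Definition T (S : signature) (E : equations S) (X : Type) : Type :=
  {A : term S X -> Prop | exists t, A = cls E t}.

Definition tclass (S : signature) (E : equations S) (X : Type) (t : term S X)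
  : T E X := exist _ (cls E t) (ex_intro _ t erefl).

Definition repr (S : signature) (E : equations S) (X : Type) (c : T E X)
  : term S X :=
  proj1_sig (constructive_indefinite_description _ (proj2_sig c)).

Definition eta (S : signature) (E : equations S) (X : Type) (x : X) : T E X :=
  tclass E (Var x).

Definition opT (S : signature) (E : equations S) (X : Type) (o : sop S)
  (cs : 'I_(sar o) -> T E X) : T E X :=
  tclass E (App o (fun i => repr (cs i))).

Definition mu (S : signature) (E : equations S) (X : Type) (c : T E (T E X))
  : T E X :=
  tclass E (bind (fun a => repr a) (repr c)).

Definition Tmap (S : signature) (E : equations S) (X Y : Type) (f : X -> Y)
  (c : T E X) : T E Y :=
  tclass E (fmap f (repr c)).

Definition semialgebra (S : signature) (E : equations S) (X : Type)
  (alpha : T E X -> X) : Prop :=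
  forall c : T E (T E X), alpha (mu c) = alpha (Tmap alpha c).

Definition interp (S : signature) (X : Type) : Type :=
  forall o : sop S, ('I_(sar o) -> X) -> X.

Fixpoint eval (S : signature) (X V : Type) (I : interp S X) (v : V -> X)
  (t : term S V) : X :=
  match t with
  | Var x => v x
  | App o ts => I o (fun i => eval I v (ts i))
  end.

Definition satisfies (S : signature) (X : Type) (I : interp S X)
  (l r : term S nat) : Prop :=
  forall v : nat -> X, eval I v l = eval I v r.

(** The extended signature Sigma^s = Sigma + {a : 1}; [None] is [a]. *)
Definition sig_s (S : signature) : signature :=
  @Signature (option (sop S))
    (fun o => match o with None => 1 | Some o' => sar o' end).

Definition sA {S : signature} {V : Type} (t : term (sig_s S) V)
  : term (sig_s S) V :=
  @App (sig_s S) V None (fun _ => t).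

Definition sOp {S : signature} {V : Type} (o : sop S)
  (ts : 'I_(sar o) -> term (sig_s S) V) : term (sig_s S) V :=
  @App (sig_s S) V (Some o) ts.

Arguments sOp {S V} o ts.

Fixpoint embed (S : signature) (V : Type) (t : term S V) : term (sig_s S) V :=
  match t with
  | Var x => Var x
  | App o ts => sOp o (fun i => embed (ts i))
  end.

(** The equations E^s (variables v_1, v_2, ... are Var 0, Var 1, ...). *)
Inductive Es (S : signature) (E : equations S)
  : term (sig_s S) nat -> term (sig_s S) nat -> Prop :=
| Es_idem : Es E (sA (sA (Var 0))) (sA (Var 0))
| Es_out (o : sop S) :
    Es E (sA (sOp o (fun i => Var (nat_of_ord i)))) (sOp o (fun i => Var (nat_of_ord i)))
| Es_in (o : sop S) :
    Es E (sOp o (fun i => sA (Var (nat_of_ord i)))) (sOp o (fun i => Var (nat_of_ord i)))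
| Es_eq (t s : term S nat) : E t s ->
    Es E (bind (fun v => sA (Var v)) (embed t)) (bind (fun v => sA (Var v)) (embed s)).

Definition G (S : signature) (E : equations S) (X : Type) (alpha : T E X -> X)
  : interp (sig_s S) X :=
  fun o => match o as o0 return ('I_(@sar (sig_s S) o0) -> X) -> X with
           | None => fun xs => alpha (eta E (xs ord0))
           | Some o' => fun xs => alpha (@opT S E X o' (fun i => eta E (xs i)))
           end.

(* Main.v *)
Require Import Defs.
From mathcomp Require Import all_boot.
From Stdlib Require Import FunctionalExtensionality PropExtensionality ProofIrrelevance ClassicalEpsilon.
Set Implicit Arguments.

Section L.
Variables (S : signature) (E : equations S).

Lemma tclass_eq (X : Type) (t u : term S X) : conv E t u -> tclass E t = tclass E u.
Proof.
move=> h; rewrite /tclass.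
have e : cls E t = cls E u.
  apply: functional_extensionality => w; apply: propositional_extensionality.
  rewrite /cls; split => H.
  - exact: conv_trans (conv_sym h) H.
  - exact: conv_trans h H.
move: (ex_intro _ t _) (ex_intro _ u _); rewrite e => p q.
by rewrite (proof_irrelevance _ p q).
Qed.

Lemma repr_spec (X : Type) (c : T E X) : tclass E (Defs.repr c) = c.
Proof.
rewrite /Defs.repr; case: (constructive_indefinite_description _ _) => t /= ht.
case: c ht => A pA /= ht; subst A; rewrite /tclass.
by rewrite (proof_irrelevance _ (ex_intro _ t erefl) pA).
Qed.

Lemma tclass_conv (X : Type) (t u : term S X) : tclass E t = tclass E u -> conv E t u.
Proof.
move=> h; have : cls E t = cls E u by move: (f_equal (@proj1_sig _ _) h).
move=> e; have : cls E t u by rewrite e; apply: conv_refl.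
done.
Qed.

Lemma repr_tclass (X : Type) (t : term S X) : conv E (Defs.repr (tclass E t)) t.
Proof. apply: tclass_conv; by rewrite repr_spec. Qed.

Lemma bind_assoc (X Y Z : Type) (s : Y -> term S Z) (sb : X -> term S Y) l :
  bind s (bind sb l) = bind (fun x => bind s (sb x)) l.
Proof.
elim: l => [x|o ts IH] //=; congr App; apply: functional_extensionality => i; exact: IH.
Qed.

Lemma bind_conv_term (X Y : Type) (s : X -> term S Y) t u :
  conv E t u -> conv E (bind s t) (bind s u).
Proof.
elim => {t u}.
- move=> t; exact: conv_refl.
- move=> t u _ h; exact: conv_sym.
- move=> t u w _ h1 _ h2; exact: conv_trans h1 h2.
- move=> l r sb H; rewrite !bind_assoc; exact: conv_inst.
- move=> o ts us _ IH /=; apply: conv_cong => i; exact: IH.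
Qed.

Lemma bind_conv_sub (X Y : Type) (s s' : X -> term S Y) t :
  (forall x, conv E (s x) (s' x)) -> conv E (bind s t) (bind s' t).
Proof.
move=> h; elim: t => [x|o ts IH] /=; first exact: h.
apply: conv_cong => i; exact: IH.
Qed.

Variables (X : Type) (alpha : T E X -> X).
Hypothesis sa : semialgebra alpha.

Lemma SA_var c : alpha c = alpha (eta E (alpha c)).
Proof.
have := sa (tclass E (Var c)).
have -> : mu (tclass E (Var c)) = c.
  rewrite /mu -{2}(repr_spec c); apply: tclass_eq.
  have h := bind_conv_term (fun a => Defs.repr a) (repr_tclass (Var c)).
  exact: h.
have -> : Tmap alpha (tclass E (Var c)) = eta E (alpha c) => //.
rewrite /Tmap /eta; apply: tclass_eq.
exact: (bind_conv_term (fun x => Var (alpha x)) (repr_tclass (Var c))).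
Qed.

Lemma SA_app o (cs : 'I_(sar o) -> T E X) :
  alpha (@opT S E X o cs) = alpha (@opT S E X o (fun i => eta E (alpha (cs i)))).
Proof.
have := sa (tclass E (App o (fun i => Var (cs i)))).
have -> : mu (tclass E (App o (fun i => Var (cs i)))) = @opT S E X o cs.
  rewrite /mu /opT; apply: tclass_eq.
  exact: (bind_conv_term (fun a => Defs.repr a) (repr_tclass _)).
move=> ->; congr alpha; rewrite /Tmap /opT; apply: tclass_eq.
apply: conv_trans.
  exact: (bind_conv_term (fun x => Var (alpha x)) (repr_tclass _)).
rewrite /fmap /=; apply: conv_cong => i; apply: conv_sym; exact: repr_tclass.
Qed.

Lemma eval_bind (I : interp (sig_s S) X) (V W : Type) (v : W -> X)
  (f : V -> term (sig_s S) W) u :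
  eval I v (bind f u) = eval I (fun x => eval I v (f x)) u.
Proof.
elim: u => [x|o ts IH] //=; congr (I o); apply: functional_extensionality => i; exact: IH.
Qed.

Lemma eval_embed (I : interp (sig_s S) X) (V : Type) (w : V -> X) (t : term S V) :
  eval I w (embed t) = eval (fun o => I (Some o)) w t.
Proof.
elim: t => [x|o ts IH] //=; rewrite /sOp /=; congr (I (Some o));
apply: functional_extensionality => i; exact: IH.
Qed.

Lemma key (V : Type) (cs : V -> T E X) (t : term S V) :
  eval (fun o => @G S E X alpha (Some o)) (fun x => alpha (cs x)) t
  = alpha (tclass E (bind (fun x => Defs.repr (cs x)) t)).
Proof.
elim: t => [x|o ts IH] /=; first by rewrite repr_spec.
set D := fun i => tclass E (bind (fun x => Defs.repr (cs x)) (ts i)).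
transitivity (alpha (@opT S E X o (fun i => eta E (alpha (D i))))).
  by congr alpha; congr opT; apply: functional_extensionality => i; rewrite IH.
rewrite -SA_app /opT; congr alpha; apply: tclass_eq.
apply: conv_cong => i; exact: repr_tclass.
Qed.

End L.

Theorem lemma10 (S : signature) (E : equations S) (X : Type)
  (alpha : T E X -> X) :
  semialgebra alpha ->
  forall l r : term (sig_s S) nat, Es E l r -> satisfies (G alpha) l r.
Proof.
move=> sa l r [| o | o | t s H] v /=.
- by rewrite -SA_var.
- by rewrite -SA_var.
- rewrite /sOp /=; symmetry; rewrite SA_app //; congr (alpha (@opT S E X o _)).
  all: try (apply: functional_extensionality => i; by []).
- rewrite !eval_bind !eval_embed /=.
  rewrite (key sa (fun x => eta E (v x)) t) (key sa (fun x => eta E (v x)) s).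
  congr alpha; apply: tclass_eq.
  apply: conv_trans.
    apply: (@bind_conv_sub S E _ _ _ (fun x => Var (v x))) => x; exact: repr_tclass.
  apply: conv_sym; apply: conv_trans.
    apply: (@bind_conv_sub S E _ _ _ (fun x => Var (v x))) => x; exact: repr_tclass.
  apply: conv_sym; exact: conv_inst.
Qed.
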